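(* Consider a 3-petal flower whose center coin has radius $1$ and whose outer coins have radii $r_1,r_2,r_3$, with internal angles $\theta_1,\theta_2,\theta_3$. Then $r_1,r_2,r_3$ are all rational if and only if $\cos\theta_i$ and $\sin\theta_i$ are rational for each $i=1,2,3$.
   Context: A 3-petal flower is a configuration of four closed disks (coins) in the Euclidean plane with pairwise disjoint interiors, a center coin and three outer coins, such that every two of the four coins are externally tangent. With center coin of radius $r$ and outer radii $r_1,r_2,r_3$, the internal angle $\theta_i$ ($i=1,2,3$, indices mod 3) is the angle at the center of the center coin between the centers of outer coins $i$ and $i+1$, so $\cos\theta_i=\frac{(r+r_i)^2+(r+r_{i+1})^2-(r_i+r_{i+1})^2}{2(r+r_i)(r+r_{i+1})}$ and $\theta_1+\theta_2+\theta_3=2\pi$. *)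

(* Defs.v *)
From Stdlib Require Import Reals QArith Lra.
Open Scope R_scope.

Definition is_rat (x : R) : Prop := exists q : Q, x = Q2R q.

Definition dist2 (p q : R * R) : R :=
  sqrt ((fst p - fst q) ^ 2 + (snd p - snd q) ^ 2).

Definition ext_tangent (p : R * R) (r : R) (q : R * R) (s : R) : Prop :=
  0 < r /\ 0 < s /\ dist2 p q = r + s.

(** cos of the internal angle at the center coin (radius r) between outer
    coins of radii a and b (law of cosines, as in the paper). *)
Definition cos_int (r a b : R) : R :=
  ((r + a) ^ 2 + (r + b) ^ 2 - (a + b) ^ 2) / (2 * (r + a) * (r + b)).

Definition theta (r a b : R) : R := acos (cos_int r a b).

Definition three_petal_flower (c c1 c2 c3 : R * R) (r r1 r2 r3 : R) : Prop :=
  ext_tangent c r c1 r1 /\ ext_tangent c r c2 r2 /\ ext_tangent c r c3 r3 /\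
  ext_tangent c1 r1 c2 r2 /\ ext_tangent c2 r2 c3 r3 /\ ext_tangent c3 r3 c1 r1 /\
  theta r r1 r2 + theta r r2 r3 + theta r r3 r1 = 2 * PI.

(* Main.v *)
Require Import Defs.
From Stdlib Require Import Reals QArith Lra Qreals.
Open Scope R_scope.

Lemma rat_plus x y : is_rat x -> is_rat y -> is_rat (x + y).
Proof. intros [p ->] [q ->]. exists (p + q)%Q. now rewrite Q2R_plus. Qed.
Lemma rat_mult x y : is_rat x -> is_rat y -> is_rat (x * y).
Proof. intros [p ->] [q ->]. exists (p * q)%Q. now rewrite Q2R_mult. Qed.
Lemma rat_opp x : is_rat x -> is_rat (- x).
Proof. intros [p ->]. exists (- p)%Q. now rewrite Q2R_opp. Qed.
Lemma rat_inv x : is_rat x -> is_rat (/ x).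
Proof.
  intros [p ->]. destruct (Qeq_dec p 0) as [H|H].
  - exists 0%Q. rewrite (Qeq_eqR _ _ H). unfold Q2R; simpl. rewrite Rmult_0_l, Rinv_0. lra.
  - exists (/ p)%Q. now rewrite Q2R_inv.
Qed.
Lemma rat_IZR z : is_rat (IZR z).
Proof. exists (inject_Z z). unfold Q2R; simpl. field. Qed.
Lemma rat_minus x y : is_rat x -> is_rat y -> is_rat (x - y).
Proof. intros. unfold Rminus. apply rat_plus; auto. now apply rat_opp. Qed.
Lemma rat_div x y : is_rat x -> is_rat y -> is_rat (x / y).
Proof. intros. unfold Rdiv. apply rat_mult; auto. now apply rat_inv. Qed.
Lemma rat_eq x y : x = y -> is_rat y -> is_rat x.
Proof. intros ->; auto. Qed.

Lemma cos_int_eq a b : 0 < a -> 0 < b ->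
  cos_int 1 a b = 1 - 2 * (a * b / ((1 + a) * (1 + b))).
Proof. intros. unfold cos_int. field. lra. Qed.

Lemma u_bounds a b : 0 < a -> 0 < b ->
  0 < a * b / ((1 + a) * (1 + b)) < 1.
Proof.
  intros Ha Hb. set (u := a * b / ((1 + a) * (1 + b))).
  assert (Hu : u * ((1 + a) * (1 + b)) = a * b) by (unfold u; field; lra).
  assert (0 < (1 + a) * (1 + b)) by nra.
  split; nra.
Qed.

Lemma half_facts a b : 0 < a -> 0 < b ->
  let t := theta 1 a b in
  0 < sin (t/2) /\ 0 < cos (t/2) /\
  sin (t/2) ^ 2 = a * b / ((1 + a) * (1 + b)) /\
  cos t = 1 - 2 * sin (t/2) ^ 2 /\ sin t = 2 * sin (t/2) * cos (t/2) /\
  0 < t < PI.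
Proof.
  intros Ha Hb t.
  pose proof (u_bounds a b Ha Hb) as Hu.
  pose proof (cos_int_eq a b Ha Hb) as Hc.
  assert (Hb1 : -1 < cos_int 1 a b < 1) by lra.
  assert (Hct : cos t = cos_int 1 a b) by (unfold t, theta; apply cos_acos; lra).
  pose proof (acos_bound (cos_int 1 a b)) as Hab. fold (theta 1 a b) in Hab. fold t in Hab.
  assert (Ht : 0 < t < PI).
  { split.
    - destruct (Req_dec t 0) as [E|E]; [|lra]. rewrite E, cos_0 in Hct. lra.
    - destruct (Req_dec t PI) as [E|E]; [|lra]. rewrite E, cos_PI in Hct. lra. }
  assert (E2 : t = 2 * (t/2)) by field.
  assert (Hs : 0 < sin (t/2)) by (apply sin_gt_0; lra).
  assert (Hco : 0 < cos (t/2)) by (apply cos_gt_0; lra).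
  assert (Hc2 : cos t = 1 - 2 * sin (t/2) ^ 2) by (rewrite E2 at 1; rewrite cos_2a_sin; ring).
  assert (Hs2 : sin t = 2 * sin (t/2) * cos (t/2)) by (rewrite E2 at 1; apply sin_2a).
  rewrite Hc2, Hc in Hct. repeat split; try lra.
Qed.

Lemma pos_sq_eq x y : 0 < x -> 0 < y -> x ^ 2 = y ^ 2 -> x = y.
Proof. intros. nra. Qed.

Theorem mainTheorem15 (c c1 c2 c3 : R * R) (r1 r2 r3 : R) :
  three_petal_flower c c1 c2 c3 1 r1 r2 r3 ->
  ((is_rat r1 /\ is_rat r2 /\ is_rat r3) <->
   ((is_rat (cos (theta 1 r1 r2)) /\ is_rat (sin (theta 1 r1 r2))) /\
    (is_rat (cos (theta 1 r2 r3)) /\ is_rat (sin (theta 1 r2 r3))) /\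
    (is_rat (cos (theta 1 r3 r1)) /\ is_rat (sin (theta 1 r3 r1))))).
Proof.
  intros (H1 & H2 & H3 & _ & _ & _ & Hsum).
  destruct H1 as (_ & Ha & _). destruct H2 as (_ & Hb & _). destruct H3 as (_ & Hc & _).
  set (a := r1) in *. set (b := r2) in *. set (d := r3) in *.
  destruct (half_facts a b Ha Hb) as (X1p & Y1p & X1s & C1 & S1 & T1). 
  destruct (half_facts b d Hb Hc) as (X2p & Y2p & X2s & C2 & S2 & T2). 
  destruct (half_facts d a Hc Ha) as (X3p & Y3p & X3s & C3 & S3 & T3).
  set (t1 := theta 1 a b) in *. set (t2 := theta 1 b d) in *. set (t3 := theta 1 d a) in *.
  set (X1 := sin (t1/2)) in *. set (Y1 := cos (t1/2)) in *.
  set (X2 := sin (t2/2)) in *. set (Y2 := cos (t2/2)) in *.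
  set (X3 := sin (t3/2)) in *. set (Y3 := cos (t3/2)) in *.
  assert (E12 : X3 = X1 * Y2 + Y1 * X2).
  { unfold X3. replace (t3/2) with (PI - (t1/2 + t2/2)) by lra.
    rewrite sin_PI_x, sin_plus. reflexivity. }
  assert (E23 : X1 = X2 * Y3 + Y2 * X3).
  { unfold X1. replace (t1/2) with (PI - (t2/2 + t3/2)) by lra.
    rewrite sin_PI_x, sin_plus. reflexivity. }
  assert (E31 : X2 = X3 * Y1 + Y3 * X1).
  { unfold X2. replace (t2/2) with (PI - (t3/2 + t1/2)) by lra.
    rewrite sin_PI_x, sin_plus. reflexivity. }
  assert (P12 : X3 * b = X1 * X2 * (1 + b)).
  { apply pos_sq_eq; try nra. apply Rmult_lt_0_compat; [nra|lra].
    replace ((X3 * b) ^ 2) with (X3 ^ 2 * b ^ 2) by ring.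
    replace ((X1 * X2 * (1 + b)) ^ 2) with (X1 ^ 2 * X2 ^ 2 * (1 + b) ^ 2) by ring.
    rewrite X1s, X2s, X3s. field. lra. }
  assert (P23 : X1 * d = X2 * X3 * (1 + d)).
  { apply pos_sq_eq; try nra. apply Rmult_lt_0_compat; [nra|lra].
    replace ((X1 * d) ^ 2) with (X1 ^ 2 * d ^ 2) by ring.
    replace ((X2 * X3 * (1 + d)) ^ 2) with (X2 ^ 2 * X3 ^ 2 * (1 + d) ^ 2) by ring.
    rewrite X1s, X2s, X3s. field. lra. }
  assert (P31 : X2 * a = X3 * X1 * (1 + a)).
  { apply pos_sq_eq; try nra. apply Rmult_lt_0_compat; [nra|lra].
    replace ((X2 * a) ^ 2) with (X2 ^ 2 * a ^ 2) by ring.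
    replace ((X3 * X1 * (1 + a)) ^ 2) with (X3 ^ 2 * X1 ^ 2 * (1 + a) ^ 2) by ring.
    rewrite X1s, X2s, X3s. field. lra. }
  set (k1 := Y1 / X1). set (k2 := Y2 / X2). set (k3 := Y3 / X3).
  assert (K12 : k1 + k2 = (1 + b) / b).
  { transitivity (X3 / (X1 * X2)).
    - unfold k1, k2. rewrite E12. field. lra.
    - assert (Hq : X3 = X1 * X2 * (1 + b) / b) by (apply (Rmult_eq_reg_r b); [rewrite P12; field|]; lra).
      rewrite Hq. field. split; lra. }
  assert (K23 : k2 + k3 = (1 + d) / d).
  { transitivity (X1 / (X2 * X3)).
    - unfold k3, k2. rewrite E23. field. lra.
    - assert (Hq : X1 = X2 * X3 * (1 + d) / d) by (apply (Rmult_eq_reg_r d); [rewrite P23; field|]; lra).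
      rewrite Hq. field. split; lra. }
  assert (K31 : k3 + k1 = (1 + a) / a).
  { transitivity (X2 / (X3 * X1)).
    - unfold k3, k1. rewrite E31. field. lra.
    - assert (Hq : X2 = X3 * X1 * (1 + a) / a) by (apply (Rmult_eq_reg_r a); [rewrite P31; field|]; lra).
      rewrite Hq. field. split; lra. }
  assert (SK1 : sin t1 = 2 * X1 ^ 2 * k1) by (rewrite S1; unfold k1; field; lra).
  assert (SK2 : sin t2 = 2 * X2 ^ 2 * k2) by (rewrite S2; unfold k2; field; lra).
  assert (SK3 : sin t3 = 2 * X3 ^ 2 * k3) by (rewrite S3; unfold k3; field; lra).
  assert (R1 : is_rat 1) by apply (rat_IZR 1).
  assert (R2 : is_rat 2) by apply (rat_IZR 2).
  split.
  - intros (Ra & Rb & Rd).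
    assert (Rx : forall x y, is_rat x -> is_rat y -> is_rat (x * y / ((1 + x) * (1 + y)))).
    { intros. apply rat_div. apply rat_mult; auto.
      apply rat_mult; apply rat_plus; auto. }
    assert (Rq : forall x, is_rat x -> is_rat ((1 + x) / x)).
    { intros. apply rat_div; auto. apply rat_plus; auto. }
    assert (Rk1 : is_rat k1).
    { apply rat_eq with (((1 + b) / b + (1 + a) / a - (1 + d) / d) / 2); [lra|].
      apply rat_div; auto. apply rat_minus; [apply rat_plus|]; auto. }
    assert (Rk2 : is_rat k2).
    { apply rat_eq with (((1 + b) / b + (1 + d) / d - (1 + a) / a) / 2); [lra|].
      apply rat_div; auto. apply rat_minus; [apply rat_plus|]; auto. }
    assert (Rk3 : is_rat k3).
    { apply rat_eq with (((1 + d) / d + (1 + a) / a - (1 + b) / b) / 2); [lra|].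
      apply rat_div; auto. apply rat_minus; [apply rat_plus|]; auto. }
    assert (Rs : forall X u k, X ^ 2 = u -> is_rat u -> is_rat k ->
              is_rat (1 - 2 * X ^ 2) /\ is_rat (2 * X ^ 2 * k)).
    { intros X u k -> Hu Hk. split.
      - apply rat_minus; auto. apply rat_mult; auto.
      - apply rat_mult; auto. apply rat_mult; auto. }
    rewrite C1, SK1, C2, SK2, C3, SK3.
    split; [|split]; eapply Rs; eauto.
  - intros ((Rc1 & Rs1) & (Rc2 & Rs2) & (Rc3 & Rs3)).
    assert (Kr : forall t X k, cos t = 1 - 2 * X ^ 2 -> sin t = 2 * X ^ 2 * k -> 0 < X ->
               is_rat (cos t) -> is_rat (sin t) -> is_rat k).
    { intros t X k Hc' Hs' HX Rc Rs.
      apply rat_eq with (sin t / (1 - cos t)).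
      + rewrite Hc', Hs'. field. nra.
      + apply rat_div; auto. apply rat_minus; auto. }
    assert (Rk1 : is_rat k1) by exact (Kr t1 X1 k1 C1 SK1 X1p Rc1 Rs1).
    assert (Rk2 : is_rat k2) by exact (Kr t2 X2 k2 C2 SK2 X2p Rc2 Rs2).
    assert (Rk3 : is_rat k3) by exact (Kr t3 X3 k3 C3 SK3 X3p Rc3 Rs3).
    assert (Rr : forall x k, 0 < x -> k = (1 + x) / x -> is_rat k -> is_rat x).
    { intros x k Hx Hk R. apply rat_eq with (/ (k - 1)).
      + rewrite Hk. field_simplify_eq; lra.
      + apply rat_inv. apply rat_minus; auto. }
    split; [|split].
    + eapply Rr; [exact Ha| exact K31|]. apply rat_plus; auto.
    + eapply Rr; [exact Hb| exact K12|]. apply rat_plus; auto.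
    + eapply Rr; [exact Hc| exact K23|]. apply rat_plus; auto.
Qed.
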